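(* Let $\Omega=(0,1)^2$, $N\ge2$, $h=1/N$, with grid points $(ih,jh)$, $0\le i,j\le N$; vectors $Z\in\mathbb{R}^{(N+1)^2}$ are indexed by grid points, $Z_I$ denotes the components at grid points in $\Omega$ and $Z_\partial$ those on $\partial\Omega$. Let $\mathcal{L}_h$ be the five-point operator $(\mathcal{L}_hZ)_{i,j}=-h^{-2}(z_{i-1,j}+z_{i+1,j}-4z_{i,j}+z_{i,j-1}+z_{i,j+1})$ at interior grid points. Let $\Omega=\Omega_1\cup\Omega_2$ be an overlapping decomposition into subdomains whose boundaries lie on grid lines; for $i=1,2$ let $Z_i,Z_{i,I},Z_{i,\partial}$ be the components of $Z$ at grid points of $\overline{\Omega_i}$, $\Omega_i$, $\partial\Omega_i$, and $\mathcal{L}_h^{(i)}$ the five-point operator at grid points of $\Omega_i$ acting on vectors indexed by grid points of $\overline{\Omega_i}$. Let $\alpha>0$, $F,Y_d\in\mathbb{R}^{(N+1)^2}$, and let $(Y,P)$ solve $$\mathcal{L}_hY=F_I-\alpha^{-1}h^{-2}P_I,\ Y_\partial=0;\qquad \mathcal{L}_h(h^{-2}P)=Y_I-Y_{d,I},\ P_\partial=0.$$ Given $Y^{(0)},P^{(0)}$ with $Y^{(0)}_\partial=P^{(0)}_\partial=0$, for $k=0,1,2,\dots$ and $i=1,2$ (in the order $i=1$ then $i=2$) define $Y^{(2k+i)},P^{(2k+i)}$ by $$\mathcal{L}_h^{(i)}Y^{(2k+i)}_i=F_{i,I}-\alpha^{-1}h^{-2}P^{(2k+i)}_{i,I},\qquad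 \mathcal{L}_h^{(i)}(h^{-2}P^{(2k+i)}_i)=Y^{(2k+i)}_{i,I}-Y_{d,i,I},$$ $Y^{(2k+i)}_{i,\partial}=Y^{(2k+i-1)}_{i,\partial}$, $P^{(2k+i)}_{i,\partial}=P^{(2k+i-1)}_{i,\partial}$, and $Y^{(2k+i)},P^{(2k+i)}$ equal to $Y^{(2k+i-1)},P^{(2k+i-1)}$ at all grid points not in $\Omega_i$. Define $E^{(j)}=(Y-Y^{(j)})^2+\alpha^{-1}h^{-4}(P-P^{(j)})^2$ (componentwise squares). Suppose the Schwarz alternating method for $\mathcal{L}_hW=0$, $W_\partial=0$ (namely $\mathcal{L}_h^{(i)}W^{(2k+i)}_i=0$, $W^{(2k+i)}_{i,\partial}=W^{(2k+i-1)}_{i,\partial}$, $W^{(2k+i)}=W^{(2k+i-1)}$ at grid points not in $\Omega_i$) is convergent with rate $\rho_{e,d}\in(0,1)$ under the maximum norm, i.e. $\max\{W^{(2k)}\}\le\rho_{e,d}\max\{W^{(2(k-1))}\}$ for $k\ge1$ and any initial guess. Then for $k=1,2,\dots$, $$\sum_{s=1}^{(N+1)^2}h^2\,(E^{(2k)})_s\le C\rho_{e,d}^k\max\{E^{(0)}\},$$ where $C>0$ is a constant independent of $h$, $\rho_{e,d}$ and $\alpha$.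
   Context: The $(Y,P)$ system is the discrete first-order optimality system (control eliminated) of the five-point finite difference discretization of minimizing $\frac12\|y-y_d\|_{L^2}^2+\frac\alpha2\|u\|_{L^2}^2$ subject to $-\Delta y=f+u$ in $(0,1)^2$, $y=0$ on the boundary. $\max\{\cdot\}$ denotes the maximum over all components. *)

(* Defs.v *)
From HB Require Import structures.
From mathcomp Require Import all_boot all_order all_algebra.
From mathcomp Require Import reals.
Set Implicit Arguments. Unset Strict Implicit. Unset Printing Implicit Defensive.
Import Order.TTheory GRing.Theory Num.Theory.
Local Open Scope ring_scope.

(* Grid points (i h, j h), 0 <= i, j <= N, indexed by pairs of ordinals. *)
Definition grid (N : nat) := ('I_N.+1 * 'I_N.+1)%type.

Definition interior (N : nat) (p : grid N) : bool :=
  ((0 < p.1)%N && (p.1 < N)%N) && ((0 < p.2)%N && (p.2 < N)%N).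

Section Defs.
Variable R : realType.

Definition hstep (N : nat) : R := (N%:R)^-1.

(* five-point operator (L_h Z)_{i,j}; only meaningful at interior points,
   where all four neighbours are grid points. *)
Definition lap5 (N : nat) (Z : grid N -> R) (p : grid N) : R :=
  - (hstep N)^-2 *
    (Z (inord p.1.-1, p.2) + Z (inord p.1.+1, p.2) - 4 * Z p
     + Z (p.1, inord p.2.-1) + Z (p.1, inord p.2.+1)).

Definition vmax (N : nat) (Z : grid N -> R) : R :=
  \big[Num.max/Z (ord0, ord0)]_(s : grid N) Z s.

Definition optsys (N : nat) (alpha : R) (F Yd Y P : grid N -> R) : Prop :=
  (forall p, interior p ->
     lap5 Y p = F p - alpha^-1 * (hstep N)^-2 * P p /\
     lap5 (fun q => (hstep N)^-2 * P q) p = Y p - Yd p) /\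
  (forall p, ~~ interior p -> Y p = 0 /\ P p = 0).

(* one Schwarz subdomain solve for the optimality system on the subdomain
   whose grid points (inside Omega_i) form the set S *)
Definition opt_step (N : nat) (alpha : R) (F Yd : grid N -> R)
  (S : {set grid N}) (Yold Pold Ynew Pnew : grid N -> R) : Prop :=
  (forall p, p \in S ->
     lap5 Ynew p = F p - alpha^-1 * (hstep N)^-2 * Pnew p /\
     lap5 (fun q => (hstep N)^-2 * Pnew q) p = Ynew p - Yd p) /\
  (forall p, p \notin S -> Ynew p = Yold p /\ Pnew p = Pold p).

Definition lap_step (N : nat) (S : {set grid N}) (Wold Wnew : grid N -> R) : Prop :=
  (forall p, p \in S -> lap5 Wnew p = 0) /\
  (forall p, p \notin S -> Wnew p = Wold p).

Definition schwarz_rate (N : nat) (S1 S2 : {set grid N}) (rho : R) : Prop :=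
  forall W : nat -> grid N -> R,
    (forall p, ~~ interior p -> W 0%N p = 0) ->
    (forall k : nat, lap_step S1 (W (2 * k)%N) (W (2 * k + 1)%N) /\
                     lap_step S2 (W (2 * k + 1)%N) (W (2 * k + 2)%N)) ->
    forall k : nat, (0 < k)%N -> vmax (W (2 * k)%N) <= rho * vmax (W (2 * (k - 1))%N).

Definition errE (N : nat) (alpha : R) (Y P Yj Pj : grid N -> R) (s : grid N) : R :=
  (Y s - Yj s) ^+ 2 + alpha^-1 * (hstep N)^-4 * (P s - Pj s) ^+ 2.

End Defs.

(* Main.v *)
Require Import Defs.
From HB Require Import structures.
From mathcomp Require Import all_boot all_order all_algebra.
From mathcomp Require Import reals.
From mathcomp Require Import ring lra.
From Stdlib Require Import ClassicalEpsilon.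
Import Order.TTheory GRing.Theory Num.Theory.
Local Open Scope ring_scope.

Section Aux.
Variable R : realType.

Lemma big_max_ge (T : eqType) (r : seq T) (F : T -> R) x0 x :
  x \in r -> F x <= \big[Num.max/x0]_(s <- r) F s.
Proof.
elim: r => [|a r IH] //=; rewrite inE big_cons => /orP [/eqP ->|/IH h].
  by rewrite le_max lexx.
by rewrite le_max h orbT.
Qed.

Lemma big_max_attained (T : eqType) (r : seq T) (F : T -> R) x0 :
  exists2 y, (y == x0) || (y \in r) & \big[Num.max/F x0]_(s <- r) F s = F y.
Proof.
elim: r => [|a r [y hy IH]] /=; first by exists x0; rewrite ?big_nil ?eqxx.
rewrite big_cons IH /Order.max; case: ifP => h.
  by exists y => //; rewrite inE; case/orP: hy => ->; rewrite ?orbT.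
by exists a; rewrite ?inE ?eqxx ?orbT.
Qed.

Lemma vmax_ge N (W : grid N -> R) s : W s <= vmax W.
Proof. by apply: big_max_ge; rewrite mem_index_enum. Qed.

Lemma vmax_att N (W : grid N -> R) : exists s, vmax W = W s.
Proof. by have [y _ h] := @big_max_attained _ (index_enum (grid N)) W (ord0, ord0); exists y. Qed.

Definition D5 N (Z : grid N -> R) (p : grid N) : R :=
    (Z (inord p.1.-1, p.2) + Z (inord p.1.+1, p.2) - 4 * Z p
     + Z (p.1, inord p.2.-1) + Z (p.1, inord p.2.+1)).

Arguments D5 {N}.

Arguments vmax_ge {N}.
Arguments vmax_att {N}.

Lemma lap5E N (Z : grid N -> R) p : lap5 Z p = - (hstep R N)^-2 * D5 Z p.
Proof. by []. Qed.

Lemma maxprin N (S : {set grid N}) (v : grid N -> R) :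
  (forall p, p \in S -> interior p) ->
  (forall p, p \notin S -> v p <= 0) ->
  (forall p, p \in S -> 0 <= D5 v p) ->
  forall p, v p <= 0.
Proof.
move=> hS hout hin.
have [m hm] := vmax_att v.
suff : vmax v <= 0 by move=> h p; exact: le_trans (vmax_ge v p) h.
rewrite leNgt; apply/negP => hpos.
suff : forall n (p : grid N), p.1 = n :> nat -> v p = vmax v -> False.
  by move=> /(_ _ m erefl) ; rewrite hm; apply.
elim=> [|n IH] p hp hv.
  have pS : p \notin S by apply/negP => /hS; rewrite /interior hp.
  by have := hout p pS; rewrite hv leNgt hpos.
have pS : p \in S.
  by case: (boolP (p \in S)) => // pS; have := hout p pS; rewrite hv leNgt hpos.
have := hin p pS; rewrite /D5 hv.
have h1 := vmax_ge v (inord p.1.-1, p.2).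
have h2 := vmax_ge v (inord p.1.+1, p.2).
have h3 := vmax_ge v (p.1, inord p.2.-1).
have h4 := vmax_ge v (p.1, inord p.2.+1).
move=> hD.
apply: (IH (inord p.1.-1, p.2)).
  by rewrite /= inordK hp //= -hp; apply: (leq_trans (leqnSn _)); case: (p.1).
lra.
Qed.


Definition cf N (S : {set grid N}) (p q : grid N) : R :=
  if p \in S then
    (q == (inord p.1.-1, p.2))%:R + (q == (inord p.1.+1, p.2))%:R - 4 * (q == p)%:R
    + (q == (p.1, inord p.2.-1))%:R + (q == (p.1, inord p.2.+1))%:R
  else (q == p)%:R.

Arguments cf {N}.

Lemma sum_ind (T : finType) (a : T) (v : T -> R) :
  \sum_q (q == a)%:R * v q = v a.
Proof.
rewrite (bigD1 a) //= eqxx mul1r big1 ?addr0 // => q /negbTE ->; by rewrite mul0r.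
Qed.

Lemma cf_sum N S (v : grid N -> R) p :
  \sum_q cf S p q * v q = if p \in S then D5 v p else v p.
Proof.
rewrite /cf; case: ifP => _; last exact: sum_ind.
under eq_bigr => q _ do rewrite mulrDl mulrDl mulrBl mulrDl -mulrA.
rewrite !big_split /=.
rewrite sumrN.
rewrite -mulr_sumr.
rewrite !sum_ind.
by rewrite /D5.
Qed.

Lemma D5N N (v : grid N -> R) p : D5 (fun q => - v q) p = - D5 v p.
Proof. rewrite /D5 /=; ring. Qed.

Lemma exists_sol N (S : {set grid N}) :
  (forall p, p \in S -> interior p) ->
  forall Wold : grid N -> R, exists Wnew, lap_step S Wold Wnew.
Proof.
move=> hS Wold.
pose n := #|{: grid N}|.
pose A : 'M[R]_n := \matrix_(i, j) cf S (enum_val j) (enum_val i).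
pose rv (v : grid N -> R) : 'rV[R]_n := \row_i v (enum_val i).
pose bk (x : 'rV[R]_n) : grid N -> R := fun p => x 0 (enum_rank p).
have rvbk x : rv (bk x) = x by apply/rowP => i; rewrite !mxE /bk enum_valK.
have mulA v p : (rv v *m A) 0 (enum_rank p) = \sum_q cf S p q * v q.
  rewrite !mxE [RHS](reindex (@enum_val _ _) (onW_bij _ (enum_val_bij _))).
  by apply: eq_bigr => i _; rewrite !mxE enum_rankK mulrC.
have uA : A \in unitmx.
  rewrite unitmxE unitfE; apply/negP => /det0P [x xn0 hx].
  move/negP: xn0; apply; apply/eqP.
  have h0 p : \sum_q cf S p q * bk x q = 0 by rewrite -mulA rvbk hx mxE.
  have hle : forall w : grid N -> R, (forall p, \sum_q cf S p q * w q = 0) -> forall p, w p <= 0.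
    move=> w hw; apply: (@maxprin N S w hS).
      by move=> p pS; have := hw p; rewrite cf_sum (negbTE pS) => ->.
    by move=> p pS; have := hw p; rewrite cf_sum pS => ->.
  apply/rowP => i; rewrite mxE -[x]rvbk mxE; apply/eqP; rewrite eq_le; apply/andP; split.
    by apply: hle.
  rewrite -oppr_le0; apply: (hle (fun q => - bk x q)) => p.
  by under eq_bigr do rewrite mulrN; rewrite sumrN h0 oppr0.
pose b p := if p \in S then 0 else Wold p.
exists (bk (rv b *m invmx A)).
have key p : \sum_q cf S p q * bk (rv b *m invmx A) q = b p.
  by rewrite -mulA rvbk mulmxKV // mxE enum_rankK.
split => p pS.
  by have := key p; rewrite cf_sum pS /b pS lap5E => ->; rewrite mulr0.
by have := key p; rewrite cf_sum (negbTE pS) /b (negbTE pS).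
Qed.


Lemma key_ineq (u1 u2 u3 u4 u0 w1 w2 w3 w4 w0 a H K : R) :
  0 < a -> 0 < H -> K = H ^+ 2 ->
  H * (u1 + u2 - 4 * u0 + u3 + u4) = a * H * w0 ->
  H * (H * (w1 + w2 - 4 * w0 + w3 + w4)) = - u0 ->
  0 <= (u1 ^+ 2 + a * K * w1 ^+ 2) + (u2 ^+ 2 + a * K * w2 ^+ 2)
       - 4 * (u0 ^+ 2 + a * K * w0 ^+ 2) + (u3 ^+ 2 + a * K * w3 ^+ 2)
       + (u4 ^+ 2 + a * K * w4 ^+ 2).
Proof.
move=> ha hH -> hu hw.
have hu' : u1 + u2 - 4 * u0 + u3 + u4 = a * w0.
  by apply: (mulfI (lt0r_neq0 hH)); rewrite hu; ring.
have hw' : H ^+ 2 * (w1 + w2 - 4 * w0 + w3 + w4) = - u0 by rewrite -hw; ring.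
have -> : (u1 ^+ 2 + a * H ^+ 2 * w1 ^+ 2) + (u2 ^+ 2 + a * H ^+ 2 * w2 ^+ 2)
       - 4 * (u0 ^+ 2 + a * H ^+ 2 * w0 ^+ 2) + (u3 ^+ 2 + a * H ^+ 2 * w3 ^+ 2)
       + (u4 ^+ 2 + a * H ^+ 2 * w4 ^+ 2) =
   ((u1 - u0) ^+ 2 + (u2 - u0) ^+ 2 + (u3 - u0) ^+ 2 + (u4 - u0) ^+ 2)
   + a * H ^+ 2 * ((w1 - w0) ^+ 2 + (w2 - w0) ^+ 2 + (w3 - w0) ^+ 2 + (w4 - w0) ^+ 2)
   + 2 * u0 * (u1 + u2 - 4 * u0 + u3 + u4)
   + 2 * a * w0 * (H ^+ 2 * (w1 + w2 - 4 * w0 + w3 + w4)) by ring.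
rewrite hu' hw'.
have -> : forall X Y : R, X + Y + 2 * u0 * (a * w0) + 2 * a * w0 * - u0 = X + Y by move=> X Y; ring.
have s1 := sqr_ge0 (u1 - u0); have s2 := sqr_ge0 (u2 - u0).
have s3 := sqr_ge0 (u3 - u0); have s4 := sqr_ge0 (u4 - u0).
have t1 := sqr_ge0 (w1 - w0); have t2 := sqr_ge0 (w2 - w0).
have t3 := sqr_ge0 (w3 - w0); have t4 := sqr_ge0 (w4 - w0).
have hc : 0 <= a * H ^+ 2 by apply: mulr_ge0; [exact: ltW | exact: sqr_ge0].
have : 0 <= a * H ^+ 2 * ((w1 - w0) ^+ 2 + (w2 - w0) ^+ 2 + (w3 - w0) ^+ 2 + (w4 - w0) ^+ 2).
  by apply: mulr_ge0 => //; lra.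
lra.
Qed.

Lemma subharm N (alpha : R) (F Yd Y P Y' P' : grid N -> R) p :
  0 < alpha -> (0 < N)%N ->
  lap5 Y p = F p - alpha^-1 * (hstep R N)^-2 * P p ->
  lap5 (fun q => (hstep R N)^-2 * P q) p = Y p - Yd p ->
  lap5 Y' p = F p - alpha^-1 * (hstep R N)^-2 * P' p ->
  lap5 (fun q => (hstep R N)^-2 * P' q) p = Y' p - Yd p ->
  0 <= D5 (errE alpha Y P Y' P') p.
Proof.
move=> ha hN.
have hh : 0 < hstep R N by rewrite /hstep invr_gt0 ltr0n.
rewrite !lap5E /D5 /errE /= => e1 e2 e3 e4.
apply: (@key_ineq _ _ _ _ _ _ _ _ _ _ _ ((hstep R N)^-2)).
- by rewrite invr_gt0.
- by rewrite invr_gt0 exprn_gt0.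
- by move: (hstep R N) => x; rewrite [RHS]exprVn -exprM.
- lra.
- lra.
Qed.

Lemma cmp_step N (S : {set grid N}) (Eo En Wo Wn : grid N -> R) :
  hstep R N != 0 ->
  (forall p, p \in S -> interior p) ->
  (forall p, Eo p <= Wo p) -> (forall p, p \notin S -> En p = Eo p) ->
  (forall p, p \in S -> 0 <= D5 En p) -> lap_step S Wo Wn ->
  forall p, En p <= Wn p.
Proof.
move=> hH hS hle hE hD [hW1 hW2] p.
rewrite -subr_le0; apply: (@maxprin N S (fun q => En q - Wn q) hS _ _ p) => q qS.
  by rewrite hE // hW2 // subr_le0.
have -> : D5 (fun q => En q - Wn q) q = D5 En q - D5 Wn q by rewrite /D5; ring.
have -> : D5 Wn q = 0.
  have := hW1 q qS; rewrite lap5E => /eqP.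
  by rewrite mulf_eq0 oppr_eq0 invr_eq0 expf_eq0 /= (negbTE hH) /= => /eqP.
by rewrite subr0 hD.
Qed.

End Aux.
Arguments subharm {R N alpha F Yd Y P Y' P' p}.
Arguments cmp_step {R N S Eo En Wo Wn}.
Arguments vmax_ge {R N}.

Theorem corollary4p1 (R : realType) :
  exists C : R, 0 < C /\
  forall (N : nat) (alpha rho : R) (S1 S2 : {set grid N})
         (F Yd Y P : grid N -> R) (Ys Ps : nat -> grid N -> R),
    (2 <= N)%N -> 0 < alpha -> 0 < rho < 1 ->
    (* Omega = Omega_1 u Omega_2 at the level of interior grid points *)
    (forall p : grid N, (p \in S1 :|: S2) = interior p) ->
    optsys alpha F Yd Y P ->
    (forall p, ~~ interior p -> Ys 0%N p = 0 /\ Ps 0%N p = 0) ->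
    (forall k : nat,
       opt_step alpha F Yd S1 (Ys (2 * k)%N) (Ps (2 * k)%N)
                              (Ys (2 * k + 1)%N) (Ps (2 * k + 1)%N) /\
       opt_step alpha F Yd S2 (Ys (2 * k + 1)%N) (Ps (2 * k + 1)%N)
                              (Ys (2 * k + 2)%N) (Ps (2 * k + 2)%N)) ->
    schwarz_rate S1 S2 rho ->
    forall k : nat, (0 < k)%N ->
      \sum_(s : grid N) (hstep R N) ^+ 2 * errE alpha Y P (Ys (2 * k)%N) (Ps (2 * k)%N) s
        <= C * rho ^+ k * vmax (errE alpha Y P (Ys 0%N) (Ps 0%N)).
Proof.
exists 4; split; first by [].
move=> N alpha rho S1 S2 F Yd Y P Ys Ps hN ha /andP[r0 r1] hU [hopt hbd] h0 hit hsch.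
have hN0 : (0 < N)%N by apply: leq_trans hN.
have hh : 0 < hstep R N by rewrite /hstep invr_gt0 ltr0n.
have hH : hstep R N != 0 by rewrite gt_eqF.
have hS1 : forall p, p \in S1 -> interior p by move=> p pS; rewrite -hU inE pS.
have hS2 : forall p, p \in S2 -> interior p by move=> p pS; rewrite -hU inE pS orbT.
pose E j := errE alpha Y P (Ys j) (Ps j).
have hc : 0 <= alpha^-1 * (hstep R N)^-4.
  by apply: mulr_ge0; rewrite invr_ge0; [exact: ltW | exact: exprn_ge0 (ltW hh)].
have Ege j s : 0 <= E j s.
  by rewrite /E /errE; apply: addr_ge0; [exact: sqr_ge0 | apply: mulr_ge0 => //; exact: sqr_ge0].
have stepE (S : {set grid N}) j j' : (forall p, p \in S -> interior p) ->
    opt_step alpha F Yd S (Ys j) (Ps j) (Ys j') (Ps j') ->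
    (forall p, p \notin S -> E j' p = E j p) /\ (forall p, p \in S -> 0 <= @D5 R N (E j') p).
  move=> hS [hnew hold]; split => p pS.
    by rewrite /E /errE; have [-> ->] := hold p pS.
  have [e1 e2] := hnew p pS; have [o1 o2] := hopt p (hS p pS).
  exact: (subharm ha hN0 o1 o2 e1 e2).
have ex1 := @exists_sol R N S1 hS1.
have ex2 := @exists_sol R N S2 hS2.
pose sol1 W := proj1_sig (constructive_indefinite_description _ (ex1 W)).
pose sol2 W := proj1_sig (constructive_indefinite_description _ (ex2 W)).
have sp1 W : lap_step S1 W (sol1 W) := proj2_sig (constructive_indefinite_description _ (ex1 W)).
have sp2 W : lap_step S2 W (sol2 W) := proj2_sig (constructive_indefinite_description _ (ex2 W)).
pose W := fix W j := match j with 0 => E 0%N | j'.+1 => if odd j' then sol2 (W j') else sol1 (W j') end.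
have W1 k : W (2 * k + 1)%N = sol1 (W (2 * k)%N) by rewrite addn1 /= oddM.
have W2 k : W (2 * k + 2)%N = sol2 (W (2 * k + 1)%N) by rewrite addnS /= oddD oddM.
have Wrate : forall k, vmax (W (2 * k)%N) <= rho ^+ k * vmax (W 0%N).
  have hw : forall k : nat, lap_step S1 (W (2 * k)%N) (W (2 * k + 1)%N) /\
                     lap_step S2 (W (2 * k + 1)%N) (W (2 * k + 2)%N).
    by move=> k; rewrite W2 W1; split; [exact: sp1 | exact: sp2].
  have hW0 : forall p, ~~ interior p -> W 0%N p = 0.
    move=> p hp; rewrite /= /E /errE; have [-> ->] := h0 p hp; have [-> ->] := hbd p hp; ring.
  have := hsch W hW0 hw => hr.
  elim=> [|k IH]; first by rewrite expr0 mul1r muln0.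
  apply: le_trans (hr k.+1 isT) _.
  rewrite subn1 /= exprS -mulrA; idtac.
exact: (ler_wpM2l (ltW r0) IH).
have cmp : forall k p, E (2 * k)%N p <= W (2 * k)%N p.
  elim=> [|k IH] p; first by rewrite muln0.
  have [hA hB] := hit k.
  have [a1 a2] := stepE _ _ _ hS1 hA.
  have [b1 b2] := stepE _ _ _ hS2 hB.
  have c1 := cmp_step hH hS1 IH a1 a2 (sp1 (W (2 * k)%N)).
  rewrite -W1 in c1.
  have c2 := cmp_step hH hS2 c1 b1 b2 (sp2 (W (2 * k + 1)%N)).
  rewrite -W2 in c2.
  by have -> : (2 * k.+1 = 2 * k + 2)%N by rewrite mulnS addnC.
move=> k hk.
have hV : 0 <= vmax (W (2 * k)%N) := le_trans (Ege _ (ord0, ord0)) (le_trans (cmp k _) (vmax_ge _ _)).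
apply: (@le_trans _ _ (\sum_(s : grid N) (hstep R N) ^+ 2 * vmax (W (2 * k)%N))).
  apply: ler_sum => s _; apply: ler_wpM2l; first exact: sqr_ge0.
  exact: le_trans (cmp k s) (vmax_ge _ _).
rewrite sumr_const card_prod card_ord -[_ *+ _]mulr_natl.
apply: (@le_trans _ _ (4 * vmax (W (2 * k)%N))).
  rewrite mulrA; apply: ler_wpM2r => //.
  have hn : 2%:R <= N%:R :> R by rewrite ler_nat.
  rewrite /hstep natrM -addn1 natrD exprVn ler_pdivrMr; last by rewrite exprn_gt0 // ltr0n.
  move: hn; set n := N%:R => hn; rewrite expr2; nra.
rewrite -mulrA; apply: ler_wpM2l => //; exact: Wrate k.
Qed.
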